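(* Let $P,Q$ be lattice paths from $(0,0)$ to $(m,r)$ with $P$ never going above $Q$ and $[P,Q]$ a connected skew shape. Then the edges of the lattice path matroid polytope $\mathcal{P}(M[P,Q])$ correspond to the block-tiled bottoms with exactly $1$ block inside the region $[P,Q]$.
   Context: Lattice paths use steps $E=(1,0)$, $N=(0,1)$. $M[P,Q]$ is the matroid on $[m+r]$ whose bases are the $r$-subsets $B$ such that the lattice path with North steps exactly at positions in $B$ stays between $P$ and $Q$; $\mathcal{P}(M[P,Q])=\mathrm{conv}\{\sum_{b\in B}e_b\}\subseteq\mathbb{R}^{m+r}$. $[P,Q]$ connected means $P,Q$ meet only at $(0,0)$ and $(m,r)$. Each unit box in $[P,Q]$ with lower-left corner $(i,j)$ is labeled $i+j+1$. A block is a border strip (connected nonempty skew shape with no $2\times2$ square) of unit boxes inside $[P,Q]$, regarded as a labeled tableau; clones are blocks equal as labeled tableaux, differing only in position. An outside corner of $[P,Q]$ is a corner $NE$ on $P$ or a corner $EN$ on $Q$. For lattice paths $\lambda,\mu$ from $(0,0)$ to $(m,r)$ in $[P,Q]$ with $\lambda$ never above $\mu$ and a tiling $\tau$ of the boxes of $[\lambda,\mu]$, $[\lambda,\mu]_\tau$ is a block-tiled region if: (1) each maximal continuous intersection of $\lambda$ and $\mu$ passes through an outside corner or an end point of $[P,Q]$; (2) $\tau$ tiles all boxes of $[\lambda,\mu]$ by blocks without gaps or overlaps; (3) any two blocks of $\tau$ containing boxes with the same label are clones. A block-tiled band is a block-tiled region containing no $2\times2$ square. Block-tiled bands are in the same family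 if their sets of maximal continuous intersections and of clones constituting them are the same. A block-tiled bottom is a block-tiled band that is the lowest among the block-tiled bands in its family. *)

(* Defs.v *)
From HB Require Import structures.
From mathcomp Require Import all_boot all_order all_algebra.
Import Order.TTheory GRing.Theory Num.Theory.

(* A lattice path from (0,0) to (m,r) with steps E=(1,0), N=(0,1) is encoded
   by the set B : {set 'I_(m+r)} of (0-indexed) positions of its North steps,
   with #|B| = r.  After k steps the path is at the lattice point
   (k - ht B k, ht B k) on the anti-diagonal x + y = k. *)

Section LatticePaths.
Variables m r : nat.

Definition lpath := {set 'I_(m + r)}.

Definition ht (B : lpath) (k : nat) : nat := #|[set i in B | i < k]|.

Definition Nstep (B : lpath) (k : nat) : bool := [exists i in B, val i == k].

Definition below (A B : lpath) : bool :=
  [forall k : 'I_(m + r).+1, ht A k <= ht B k].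

(* P and Q meet only at (0,0) and (m,r) *)
Definition connected_PQ (P Q : lpath) : Prop :=
  forall k : nat, 0 < k < m + r -> ht P k < ht Q k.

(* unit boxes: lower-left corner (i,j), 0 <= i < m, 0 <= j < r *)
Definition box := ('I_m * 'I_r)%type.
Definition label (b : box) : nat := (b.1 + b.2).+1.

Definition region (A B : lpath) : {set box} :=
  [set b : box | (ht A (label b) <= b.2) && (b.2 < ht B (label b))].

Definition adj (a b : box) : bool :=
  ((a.1 == b.1 :> nat) && ((a.2.+1 == b.2 :> nat) || (b.2.+1 == a.2 :> nat)))
  || ((a.2 == b.2 :> nat) && ((a.1.+1 == b.1 :> nat) || (b.1.+1 == a.1 :> nat))).

Definition connected_boxes (S : {set box}) : bool :=
  (S != set0) &&
  [forall a in S, forall b in S,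
     connect (fun x y => [&& x \in S, y \in S & adj x y]) a b].

Definition skew_shape (S : {set box}) : Prop :=
  exists A B : lpath, [/\ #|A| = r, #|B| = r, below A B & S = region A B].

Definition inS (S : {set box}) (i j : nat) : bool :=
  [exists b in S, (b.1 == i :> nat) && (b.2 == j :> nat)].

Definition has_square (S : {set box}) : bool :=
  [exists b in S, [&& inS S b.1.+1 b.2, inS S b.1 b.2.+1 & inS S b.1.+1 b.2.+1]].

Definition is_block (P Q : lpath) (S : {set box}) : Prop :=
  [/\ S \subset region P Q, connected_boxes S, skew_shape S & ~~ has_square S].

Definition inZ (S : {set box}) (x y : int) : bool :=
  [exists b in S, (x == Posz (b.1 : nat)) && (y == Posz (b.2 : nat))].

(* clones: equal as labeled tableaux, i.e. translates of each other by a
   vector (d,-d) (translations preserving the labels i+j+1) *)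
Definition clone (S T : {set box}) : Prop :=
  exists d : int, forall x y : int, inZ T x y = inZ S (x - d)%R (y + d)%R.

(* [a,b] is a maximal interval of anti-diagonals on which A and B share
   their lattice point: a maximal continuous intersection of A and B *)
Definition maxint (A B : lpath) (a b : nat) : Prop :=
  [/\ a <= b <= m + r,
      (forall k, a <= k <= b -> ht A k = ht B k),
      (a = 0 \/ ht A a.-1 <> ht B a.-1) &
      (b = m + r \/ ht A b.+1 <> ht B b.+1)].

(* the point of A on anti-diagonal k is an end point of [P,Q] or an outside
   corner of [P,Q] (a corner NE on P or a corner EN on Q) *)
Definition good_point (P Q A : lpath) (k : nat) : Prop :=
  k = 0 \/ k = m + r \/
  (0 < k < m + r /\
   ((ht P k = ht A k /\ Nstep P k.-1 /\ ~~ Nstep P k) \/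
    (ht Q k = ht A k /\ ~~ Nstep Q k.-1 /\ Nstep Q k))).

Definition comp (A : lpath) (a b : nat) : seq (nat * nat) :=
  [seq (k - ht A k, ht A k) | k <- iota a (b - a).+1].

Definition block_tiled_region (P Q A B : lpath) (tau : {set {set box}}) : Prop :=
  [/\ [/\ #|A| = r, #|B| = r, below P A, below B Q & below A B],
      (forall a b, maxint A B a b -> exists k, a <= k <= b /\ good_point P Q A k),
      [/\ (forall S, S \in tau -> is_block P Q S),
          (forall S T, S \in tau -> T \in tau -> S != T -> [disjoint S & T]) &
          \bigcup_(S in tau) S = region A B] &
      (forall S T, S \in tau -> T \in tau ->
         (exists a b, [/\ a \in S, b \in T & label a = label b]) -> clone S T)].

Definition block_tiled_band (P Q A B : lpath) (tau : {set {set box}}) : Prop :=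
  block_tiled_region P Q A B tau /\ ~~ has_square (region A B).

Definition same_family (A B : lpath) (tau : {set {set box}})
    (A' B' : lpath) (tau' : {set {set box}}) : Prop :=
  (forall s, (exists a b, maxint A B a b /\ s = comp A a b) <->
             (exists a b, maxint A' B' a b /\ s = comp A' a b)) /\
  (forall S, S \in tau -> exists2 S', S' \in tau' & clone S S') /\
  (forall S', S' \in tau' -> exists2 S, S \in tau & clone S S').

Definition block_tiled_bottom (P Q A B : lpath) (tau : {set {set box}}) : Prop :=
  block_tiled_band P Q A B tau /\
  forall A' B' tau', block_tiled_band P Q A' B' tau' ->
    same_family A B tau A' B' tau' -> below A A' /\ below B B'.

Definition bases (P Q : lpath) : {set lpath} :=
  [set B : lpath | [&& #|B| == r, below P B & below B Q]].

Variable R : realFieldType.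
Local Open Scope ring_scope.

Definition vertex (B : lpath) : 'rV[R]_(m + r) :=
  \row_i (if i \in B then 1 else 0).

Definition lpm_polytope (P Q : lpath) (x : 'rV[R]_(m + r)) : Prop :=
  exists c : lpath -> R,
    [/\ forall B, 0 <= c B,
        \sum_(B in bases P Q) c B = 1 &
        x = \sum_(B in bases P Q) c B *: vertex B].

Definition dotv (w x : 'rV[R]_(m + r)) : R := \sum_i w 0 i * x 0 i.

Definition is_face (Pol F : 'rV[R]_(m + r) -> Prop) : Prop :=
  exists w : 'rV[R]_(m + r), forall x,
    F x <-> (Pol x /\ forall y, Pol y -> dotv w y <= dotv w x).

Definition segment (u v : 'rV[R]_(m + r)) (x : 'rV[R]_(m + r)) : Prop :=
  exists t : R, [/\ 0 <= t, t <= 1 & x = t *: u + (1 - t) *: v].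

Definition is_edge (Pol F : 'rV[R]_(m + r) -> Prop) : Prop :=
  is_face Pol F /\ exists u v, u != v /\ forall x, F x <-> segment u v x.

End LatticePaths.

(* Main.v *)
Require Import Defs.
From HB Require Import structures.
From mathcomp Require Import all_boot all_order all_algebra.
From mathcomp Require Import zify ring lra.
Import Order.TTheory GRing.Theory Num.Theory.

Set Implicit Arguments. Unset Strict Implicit. Unset Printing Implicit Defensive.

Section Ht.
Variables m r : nat.
Implicit Types X A B C : lpath m r.
Local Notation ht := (Defs.ht m r).
Local Notation below := (Defs.below m r).

Lemma ht0 X : ht X 0 = 0.
Proof. by apply/eqP; rewrite cards_eq0; apply/eqP/setP=> i; rewrite !inE ltn0 andbF. Qed.

Lemma htS X (x : 'I_(m+r)) : ht X x.+1 = ht X x + (x \in X).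
Proof.
rewrite /ht (cardsD1 x) addnC; congr (_ + _).
  apply: eq_card => i; rewrite !inE; case: eqVneq => [->|ne] /=; first by rewrite ltnn andbF.
  by rewrite ltnS leq_eqVlt (inj_eq val_inj) (negbTE ne).
by rewrite !inE ltnSn andbT.
Qed.

Lemma ht_end X k : m + r <= k -> ht X k = #|X|.
Proof.
move=> h; rewrite /ht; apply: eq_card => i; rewrite !inE.
by rewrite (leq_trans (ltn_ord i) h) andbT.
Qed.

Lemma ht_card X k : ht X k <= #|X|.
Proof. by apply: subset_leq_card; apply/subsetP=> i; rewrite inE => /andP[]. Qed.

Lemma ht_mono X k l : k <= l -> ht X k <= ht X l.
Proof.
move=> kl; apply: subset_leq_card; apply/subsetP=> i; rewrite !inE => /andP[-> /leq_trans]; exact.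
Qed.

Lemma htS_le X k : ht X k.+1 <= (ht X k).+1.
Proof.
case: (ltnP k (m+r)) => [kn|kn].
  by rewrite (htS X (Ordinal kn)) /=; case: (_ \in _); rewrite ?addn0 ?addn1.
by rewrite !ht_end // (leq_trans kn).
Qed.

Lemma ht_diff X k l : k <= l -> ht X l <= ht X k + (l - k).
Proof.
move=> kl; elim: l kl => [|l IH]; first by rewrite leqn0 => /eqP ->; rewrite addn0.
rewrite leq_eqVlt => /orP[/eqP <-|]; first by rewrite subnn addn0.
rewrite ltnS => kl; apply: (leq_trans (htS_le X l)).
by rewrite subSn // addnS ltnS IH.
Qed.

Lemma ht_le X k : ht X k <= k.
Proof. by have := ht_diff X (leq0n k); rewrite ht0 subn0. Qed.

Lemma ht_E X k : #|X| = r -> k <= m + r -> k <= m + ht X k.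
Proof.
move=> cX kn; have := ht_diff X kn; rewrite ht_end // cX; lia.
Qed.

Lemma ht_inj A B : (forall k, k <= m + r -> ht A k = ht B k) -> A = B.
Proof.
move=> h; apply/setP=> x.
have := htS A x; have := htS B x.
rewrite !h ?(ltnW (ltn_ord x)) // => ->.
by move/eqP; rewrite eqn_add2l => /eqP; case: (x \in A); case: (x \in B).
Qed.

Lemma ht_addU X (x : 'I_(m+r)) k : x \notin X -> ht (x |: X) k = ht X k + (x < k).
Proof.
move=> xX; rewrite /ht.
case: (ltnP x k) => xk.
  rewrite addn1 (cardsD1 x) !inE eqxx xk /= add1n; congr _.+1.
  by apply: eq_card => i; rewrite !inE; case: eqVneq => [->|] //=; rewrite (negbTE xX).
rewrite addn0; apply: eq_card => i; rewrite !inE; case: eqVneq => [->|] //=.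
by rewrite (negbTE xX) ltnNge xk.
Qed.

Lemma ht_D1 X (x : 'I_(m+r)) k : x \in X -> ht (X :\ x) k + (x < k) = ht X k.
Proof.
move=> xX; rewrite /ht [in RHS](cardsD1 x) !inE xX /= addnC; congr (_ + _).
by apply: eq_card => i; rewrite !inE andbA.
Qed.

Definition belowb A B := forall k, k <= m + r -> ht A k <= ht B k.

Lemma belowP A B : reflect (belowb A B) (below A B).
Proof.
apply: (iffP forallP) => [h k kn|h k]; last exact: h (ltn_ord k).
exact: (h (Ordinal (kn : k < (m+r).+1))).
Qed.

Lemma below_trans A B C : below A B -> below B C -> below A C.
Proof.
move=> /belowP h1 /belowP h2; apply/belowP=> k kn; exact: leq_trans (h1 k kn) (h2 k kn).
Qed.

Lemma below_anti A B : below A B -> below B A -> A = B.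
Proof.
move=> /belowP h1 /belowP h2; apply: ht_inj => k kn; apply/eqP; rewrite eqn_leq h1 ?h2 //.
Qed.

End Ht.


Set Implicit Arguments. Unset Strict Implicit. Unset Printing Implicit Defensive.

Section Boxes.
Variables m r : nat.
Implicit Types X A B C : lpath m r.
Local Notation ht := (Defs.ht m r).
Local Notation below := (Defs.below m r).
Local Notation region := (Defs.region m r).
Local Notation box := (Defs.box m r).
Local Notation label := (Defs.label m r).
Local Notation has_square := (Defs.has_square m r).
Local Notation inS := (Defs.inS m r).

Lemma mkbox x y : x < m -> y < r -> exists b : box, (b.1 : nat) = x /\ (b.2 : nat) = y.
Proof. by move=> hx hy; exists (Ordinal hx, Ordinal hy). Qed.

Lemma in_region A B b :
  (b \in region A B) = (ht A (label b) <= b.2) && (b.2 < ht B (label b)).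
Proof. by rewrite inE. Qed.

Lemma region_K A B b : b \in region A B -> ht A (label b) < ht B (label b).
Proof. rewrite in_region => /andP[h1 h2]; exact: leq_ltn_trans h1 h2. Qed.

Lemma box_at A B k : #|A| = r -> #|B| = r -> ht A k < ht B k ->
  exists2 b, b \in region A B & (label b = k /\ (b.2 : nat) = ht A k).
Proof.
move=> cA cB hk.
have kn : k <= m + r.
  rewrite leqNgt; apply/negP => kn; move: hk; rewrite !ht_end ?(ltnW kn) // cA cB ltnn //.
have e1 := ht_E cA kn; have e2 := ht_le B k; have e3 := ht_card B k.
have [b [b1 b2]] : exists b : box, (b.1 : nat) = k.-1 - ht A k /\ (b.2 : nat) = ht A k.
  apply: mkbox; lia.
have lb : label b = k by rewrite /label b1 b2; lia.
exists b => //; rewrite in_region lb b2 leqnn /=; exact: hk.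
Qed.

Lemma nosq_le A B k : ~~ has_square (region A B) -> #|A| = r -> #|B| = r ->
  ht B k <= (ht A k).+1.
Proof.
move=> nsq cA cB; rewrite leqNgt; apply/negP => hk.
have kn : k <= m + r.
  rewrite leqNgt; apply/negP => kn; move: hk; rewrite !ht_end ?(ltnW kn) // cA cB; lia.
set h := ht A k.
have e1 := ht_E cA kn; have e2 := ht_le B k; have e3 := ht_card B k.
have a1 := htS_le A k; have a2 := ht_mono A (leq_pred k).
have b1 := htS_le B k.-1; have b2 := ht_mono B (leqnSn k).
have kpos : 0 < k by lia.
rewrite prednK // in b1.
have [b [eb1 eb2]] : exists b : box, (b.1 : nat) = k - 2 - h /\ (b.2 : nat) = h by apply: mkbox; lia.
move/negP: nsq; apply; apply/existsP; exists b; rewrite in_region.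
have lb : label b = k.-1 by rewrite /label eb1 eb2; lia.
rewrite lb eb1 eb2; apply/and4P; split.
- apply/andP; split; [exact: a2| lia].
- have [c [c1 c2]] : exists c : box, (c.1 : nat) = k - 1 - h /\ (c.2 : nat) = h by apply: mkbox; lia.
  apply/existsP; exists c; rewrite in_region /label c1 c2.
  have -> : (k - 1 - h + h).+1 = k by lia.
  apply/and3P; split; [apply/andP; split; [done|lia] | apply/eqP; lia | done].
- have [c [c1 c2]] : exists c : box, (c.1 : nat) = k - 2 - h /\ (c.2 : nat) = h.+1 by apply: mkbox; lia.
  apply/existsP; exists c; rewrite in_region /label c1 c2.
  have -> : (k - 2 - h + h.+1).+1 = k by lia.
  apply/and3P; split; [apply/andP; split; [lia|lia] | done | apply/eqP; lia].
- have [c [c1 c2]] : exists c : box, (c.1 : nat) = k - 1 - h /\ (c.2 : nat) = h.+1 by apply: mkbox; lia.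
  apply/existsP; exists c; rewrite in_region /label c1 c2.
  have -> : (k - 1 - h + h.+1).+1 = k.+1 by lia.
  apply/and3P; split; [apply/andP; split; [exact: a1|lia] | apply/eqP; lia | apply/eqP; lia].
Qed.

Lemma adj_label a b : adj m r a b -> label b = (label a).+1 \/ label a = (label b).+1.
Proof.
rewrite /adj /label => /orP[/andP[/eqP e /orP[/eqP e2|/eqP e2]]|/andP[/eqP e /orP[/eqP e2|/eqP e2]]]; lia.
Qed.

End Boxes.


Set Implicit Arguments. Unset Strict Implicit. Unset Printing Implicit Defensive.

Section Rib.
Variables m r : nat.
Implicit Types X A B C : lpath m r.
Local Notation ht := (Defs.ht m r).
Local Notation below := (Defs.below m r).
Local Notation region := (Defs.region m r).
Local Notation box := (Defs.box m r).
Local Notation label := (Defs.label m r).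
Local Notation has_square := (Defs.has_square m r).
Local Notation inS := (Defs.inS m r).
Local Notation adj := (Defs.adj m r).

Lemma adj_sym a b : adj a b = adj b a.
Proof.
rewrite /adj.
by do ![case: eqP => ?] => //=; lia.
Qed.

Lemma box_eq (a b : box) : (a.1 : nat) = b.1 -> (a.2 : nat) = b.2 -> a = b.
Proof. by case: a b => [a1 a2] [b1 b2] /= e1 e2; congr pair; apply: val_inj. Qed.

Definition rib A B i j :=
  i < j < m + r /\ forall k, ht B k = ht A k + ((i < k) && (k <= j)).

Lemma rib_region A B i j b : rib A B i j ->
  (b \in region A B) = ((i < label b <= j) && ((b.2 : nat) == ht A (label b))).
Proof.
move=> [_ h]; rewrite in_region h; case: (i < label b <= j); rewrite ?addn0 ?addn1 /=.
  by rewrite ltnS -eqn_leq eq_sym.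
by apply/negbTE/negP => /andP[x y]; move: (leq_ltn_trans x y); rewrite ltnn.
Qed.

Lemma rib_nosq A B i j : rib A B i j -> ~~ has_square (region A B).
Proof.
move=> hr; apply/existsP => -[b /andP[hb /and3P[/existsP[c /andP[hc /andP[/eqP c1 /eqP c2]]] /existsP[d /andP[hd /andP[/eqP d1 /eqP d2]]] _]]].
move: hc hd; rewrite !(rib_region _ hr) => /andP[_ /eqP e1] /andP[_ /eqP e2].
have lc : label c = label d by rewrite /label c1 c2 d1 d2; lia.
move: e1 e2; rewrite lc => <-; lia.
Qed.

Lemma rib_below A B i j : rib A B i j -> below A B.
Proof. by move=> [_ h]; apply/belowP=> k _; rewrite h leq_addr. Qed.

Lemma rib_neq A B i j : rib A B i j -> A != B.
Proof.
move=> [hij h]; apply/eqP => eAB; move: (h j); rewrite eAB.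
have -> : (i < j) && (j <= j) by rewrite leqnn andbT; case/andP: hij.
lia.
Qed.

Lemma rib_mem A B i j : rib A B i j ->
  exists (oi oj : 'I_(m+r)), [/\ val oi = i, val oj = j, oi \notin A, oj \in A &
                                B = oi |: (A :\ oj)].
Proof.
move=> [/andP[ij jn] h].
have hi : i < m + r by apply: ltn_trans jn.
exists (Ordinal hi), (Ordinal jn).
have hx : forall x : 'I_(m+r), (x \in B : nat) + ((i < x) && (x <= j)) = (x \in A) + ((i <= x) && (x < j)).
  move=> x; have := htS B x; have := htS A x; rewrite !h => e1 e2.
  have : ht A x.+1 + ((i < x.+1) && (x.+1 <= j)) = ht A x + (i < x) && (x <= j) + (x \in B) by [].
  rewrite e1 ltnS; case: (i <= x); case: (x < j); case: (i < x); case: (x <= j); lia.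
have hiA : Ordinal hi \notin A.
  apply/negP=> hA; have := hx (Ordinal hi); rewrite hA /= ltnn leqnn ij /=; lia.
have hjA : Ordinal jn \in A.
  apply/negP=> /negP hA; have := hx (Ordinal jn); rewrite (negbTE hA) /= ltnn ij leqnn /=; lia.
split => //; apply/setP=> x; rewrite !inE.
have := hx x; case: (x \in B); case: (x \in A);
  rewrite -!(inj_eq val_inj) /=; case: (ltngtP x i) => xi; case: (ltngtP x j) => xj /=; lia.
Qed.

Lemma rib_step A B i j a : #|A| = r -> #|B| = r -> rib A B i j ->
  a \in region A B -> label a < j ->
  exists2 a', a' \in region A B & label a' = (label a).+1 /\ adj a a'.
Proof.
case: a => a1 a2 cA cB hr ha lj; have [hij h] := hr.
move: (ha); rewrite (rib_region _ hr) => /andP[/andP[il _] /eqP ea2].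
have K : ht A (label (a1, a2)).+1 < ht B (label (a1, a2)).+1.
  by rewrite h lj (ltn_trans il (ltnSn _)) addn1.
have [[b1 b2] ha' [la' eb2]] := box_at cA cB K.
exists (b1, b2) => //; split => //.
have s1 := htS_le A (label (a1, a2)); have s2 := ht_mono A (leqnSn (label (a1, a2))).
move: la' eb2 ea2 s1 s2; rewrite /adj /label /=.
move: (ht A (a1 + a2).+1) (ht A (a1 + a2).+2) => x y la' a'2 a2' s1 s2.
case: (ltngtP y x) => c; first lia.
- apply/orP; left; apply/andP; split; first (rewrite eqn_leq; apply/andP; split; lia).
  apply/orP; left; rewrite eqn_leq; apply/andP; split; lia.
- apply/orP; right; apply/andP; split; first (rewrite eqn_leq; apply/andP; split; lia).
  apply/orP; left; rewrite eqn_leq; apply/andP; split; lia.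
Qed.

Lemma rib_conn A B i j : #|A| = r -> #|B| = r -> rib A B i j ->
  connected_boxes m r (region A B).
Proof.
move=> cA cB hr; have [/andP[ij jn] h] := hr.
set S := region A B; set e := (fun x y => [&& x \in S, y \in S & adj x y]).
have esym : connect_sym e.
  by apply: sym_connect_sym => x y; rewrite /e adj_sym andbCA.
have up : forall n a b, a \in S -> b \in S -> label a <= label b -> label b - label a = n ->
    connect e a b.
  elim=> [|n IH] [a1 a2] [b1 b2] ha hb lab.
    move=> /eqP; rewrite subn_eq0 => lba.
    have ll : label (a1, a2) = label (b1, b2) by apply/eqP; rewrite eqn_leq lab lba.
    move: ha hb; rewrite /S !(rib_region _ hr) => /andP[_ /eqP ea] /andP[_ /eqP eb].
    rewrite -ll in eb.
    move: ea eb ll; rewrite /label /= => ea eb ll.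
    have e2 : (a2 : nat) = b2 by rewrite ea eb.
    have e1 : (a1 : nat) = b1 by lia.
    by rewrite (box_eq (a:=(a1,a2)) (b:=(b1,b2))).
  move=> hn; set a := (a1, a2); set b := (b1, b2).
  have laj : label a < j.
    move: hb; rewrite /S (rib_region _ hr) => /andP[/andP[_ lb] _].
    move: hn lb; move: (label a) (label b) => x y; lia.
  have [a' ha' [la' adja]] := rib_step cA cB hr ha laj.
  apply: connect_trans (connect1 _) (IH a' b ha' hb _ _); first by rewrite /e ha ha' adja.
    by rewrite la'; move: hn lab; move: (label a) (label b) => x y; lia.
  by rewrite la'; move: hn lab; move: (label a) (label b) => x y; lia.
apply/andP; split.
  have K : ht A j < ht B j by rewrite h ij leqnn addn1.
  by have [b hb _] := box_at cA cB K; apply/set0Pn; exists b.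
apply/forallP=> a; apply/implyP=> ha; apply/forallP=> b; apply/implyP=> hb.
case: (leqP (label a) (label b)) => lab; first exact: up erefl.
by rewrite esym; apply: up erefl; rewrite // ltnW.
Qed.

End Rib.


Set Implicit Arguments. Unset Strict Implicit. Unset Printing Implicit Defensive.

Section Extract.
Variables m r : nat.
Implicit Types X A B C P Q : lpath m r.
Local Notation ht := (Defs.ht m r).
Local Notation below := (Defs.below m r).
Local Notation region := (Defs.region m r).
Local Notation box := (Defs.box m r).
Local Notation label := (Defs.label m r).
Local Notation has_square := (Defs.has_square m r).
Local Notation adj := (Defs.adj m r).

Lemma path_lab (S : {set box}) k p x :
  (forall z, z \in S -> label z != k) -> label x < k ->
  path (fun x y => [&& x \in S, y \in S & adj x y]) x p -> label (last x p) < k.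
Proof.
move=> nk; elim: p x => [|y p IH] x //= lx /andP[/and3P[_ yS axy] hp].
apply: IH hp; have := nk y yS; have := adj_label axy.
move: lx; move: (label x) (label y) => u v lx [e|e]; lia.
Qed.

Lemma bottom1 P Q A B tau : block_tiled_bottom m r P Q A B tau -> #|tau| = 1 ->
  [/\ tau = [set region A B], #|A| = r /\ #|B| = r, below P A, below B Q &
      exists i j, rib A B i j].
Proof.
case=> [[[[cA cB PA BQ AB] c1 [blk disj un] c3] nsq] _] /eqP /cards1P [S eS]; subst tau.
have eS : S = region A B by rewrite -un big_set1.
have [_ conn _ _] := blk S (set11 S).
rewrite eS in conn *; split => //.
have le1 := fun k => nosq_le k nsq cA cB.
have ge : forall k, ht A k <= ht B k.
  move=> k; case: (leqP k (m + r)) => kn; first by move/belowP: AB; apply.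
  by rewrite !ht_end ?(ltnW kn) // cA cB.
have bnd : forall k, ht A k < ht B k -> k < m + r.
  move=> k hk; rewrite ltnNge; apply/negP => kn; move: hk; by rewrite !ht_end // cA cB ltnn.
have exK : exists k, ht A k < ht B k.
  case/andP: conn => /set0Pn [b hb] _; exists (label b); exact: region_K hb.
case: (ex_minnP exK) => lo Klo lomin.
have bnd' : forall k, ht A k < ht B k -> k <= m + r by move=> k /bnd /ltnW.
case: (ex_maxnP exK bnd') => hi Khi himax.
have lohi : lo <= hi by apply: himax.
have lo0 : 0 < lo by move: Klo; case: (lo) => //; rewrite !ht0.
have inter : forall k, lo <= k <= hi -> ht A k < ht B k.
  move=> k /andP[k1 k2]; rewrite ltnNge; apply/negP => nK.
  have nK' : ~~ (ht A k < ht B k) by rewrite -leqNgt.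
  have [a ha [la _]] := box_at cA cB Klo.
  have [b hb [lb _]] := box_at cA cB Khi.
  case/andP: conn => _ /forallP/(_ a)/implyP/(_ ha)/forallP/(_ b)/implyP/(_ hb)/connectP [p hp lp].
  have nk : forall z, z \in region A B -> label z != k.
    move=> z /region_K hz; apply/eqP => ez; move: nK'; rewrite -ez hz //.
  have lak : label a < k.
    rewrite la ltn_neqAle k1 andbT; apply/eqP => ek; move: nK'; rewrite -ek Klo //.
  have := path_lab nk lak hp; rewrite -lp lb => hk.
  have : hi != k by apply/eqP => ek; move: nK'; rewrite -ek Khi.
  lia.
exists lo.-1, hi; split.
  by apply/andP; split; [lia | exact: bnd].
move=> k; case: (boolP (ht A k < ht B k)) => Kk.
  have := le1 k; have := lomin k Kk; have := himax k Kk.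
  move=> h1 h2 h3; have -> : (lo.-1 < k) && (k <= hi) by apply/andP; split; lia.
  lia.
have -> : (lo.-1 < k) && (k <= hi) = false.
  apply/negbTE/negP => /andP[h1 h2]; move: Kk; rewrite inter //; apply/andP; split; lia.
have := ge k; move: Kk; rewrite -leqNgt; lia.
Qed.

End Extract.


Set Implicit Arguments. Unset Strict Implicit. Unset Printing Implicit Defensive.

Section Poly.
Variables (m r : nat) (R : realFieldType).
Implicit Types X A B C P Q : lpath m r.
Local Open Scope ring_scope.
Local Notation vertex := (Defs.vertex m r R).
Local Notation dotv := (Defs.dotv m r R).
Local Notation segment := (Defs.segment m r R).
Local Notation row := 'rV[R]_(m + r).

Lemma vertexE C i : vertex C 0 i = if i \in C then 1 else 0.
Proof. by rewrite mxE. Qed.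

Lemma dotvD w (x y : row) : dotv w (x + y) = dotv w x + dotv w y.
Proof. by rewrite /dotv -big_split; apply: eq_bigr => i _; rewrite mxE mulrDr. Qed.

Lemma dotvZ w a (x : row) : dotv w (a *: x) = a * dotv w x.
Proof. by rewrite /dotv mulr_sumr; apply: eq_bigr => i _; rewrite mxE mulrCA. Qed.

Lemma dotv_sum (I : finType) (S : {pred I}) w (c : I -> R) (f : I -> row) :
  dotv w (\sum_(C in S) c C *: f C) = \sum_(C in S) c C * dotv w (f C).
Proof.
rewrite /dotv; under eq_bigr => i _ do rewrite summxE mulr_sumr.
rewrite exchange_big /=; apply: eq_bigr => C _; rewrite mulr_sumr.
by apply: eq_bigr => i _; rewrite mxE mulrCA.
Qed.

Lemma dot_vert A C : dotv (vertex A) (vertex C) = #|A :&: C|%:R.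
Proof.
rewrite /dotv (eq_bigr (fun i => if i \in A :&: C then 1 else 0)); last first.
  by move=> i _; rewrite !vertexE inE; case: (i \in A); case: (i \in C); rewrite ?mul1r ?mul0r.
by rewrite -big_mkcond sumr_const.
Qed.

Lemma vertex_inj A B : vertex A = vertex B -> A = B.
Proof.
move=> e; apply/setP => i; have := congr1 (fun v : row => v 0 i) e; rewrite /= !vertexE.
by case: (i \in A); case: (i \in B) => //= /eqP; rewrite ?oner_eq0 // eq_sym oner_eq0.
Qed.

Lemma seg_vert A B C t : A != B ->
  vertex C = t *: vertex A + (1 - t) *: vertex B -> C = A \/ C = B.
Proof.
move=> nAB e.
have [x hx] : exists x, (x \in A) != (x \in B).
  apply/existsP; apply: contraR nAB; rewrite negb_exists => /forallP h.
  apply/eqP/setP=> x; apply/eqP; move: (h x); by rewrite negbK.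
have := congr1 (fun v : row => v 0 x) e; rewrite /= !mxE.
have t01 : (t = 0 \/ t = 1) -> C = A \/ C = B.
  case=> et; [right|left]; apply: vertex_inj; rewrite e et ?subr0 ?subrr ?scale0r ?scale1r ?add0r ?addr0 //.
move: hx; case: (x \in A); case: (x \in B) => //= _; rewrite ?mulr1 ?mulr0 ?addr0 ?add0r;
  case: (x \in C) => ec; apply: t01; [right|left|left|right]; lra.
Qed.

End Poly.


Set Implicit Arguments. Unset Strict Implicit. Unset Printing Implicit Defensive.

Section Poly2.
Variables (m r : nat) (R : realFieldType) (P Q : lpath m r).
Implicit Types X A B C : lpath m r.
Local Open Scope ring_scope.
Local Notation vertex := (Defs.vertex m r R).
Local Notation dotv := (Defs.dotv m r R).
Local Notation segment := (Defs.segment m r R).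
Local Notation bases := (Defs.bases m r P Q).
Local Notation Pol := (Defs.lpm_polytope m r R P Q).
Local Notation row := 'rV[R]_(m + r).

Lemma basesP C : reflect [/\ #|C| = r, below m r P C & below m r C Q] (C \in bases).
Proof. by rewrite inE; apply: (iffP and3P) => -[/eqP ? ? ?]; split => //; apply/eqP. Qed.

Lemma sum2 (V : nmodType) (F : lpath m r -> V) A B : A \in bases -> B \in bases -> A != B ->
  \sum_(C in bases) F C = F A + F B + \sum_(C in bases | (C != A) && (C != B)) F C.
Proof.
move=> hA hB nAB; rewrite (bigD1 A) //= (bigD1 B) /=; last by rewrite hB eq_sym.
rewrite addrA; congr (_ + _); apply: eq_bigl => C.
by rewrite andbA.
Qed.

Lemma pol_vert C : C \in bases -> Pol (vertex C).
Proof.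
move=> hC; exists (fun D => (D == C)%:R); split.
- by move=> D; rewrite ler0n.
- by rewrite (bigD1 C) //= eqxx big1 ?addr0 // => D /andP[_ /negbTE ->].
- by rewrite (bigD1 C) //= eqxx scale1r big1 ?addr0 // => D /andP[_ /negbTE ->]; rewrite scale0r.
Qed.

Lemma pol_le w y (M : R) : Pol y -> (forall C, C \in bases -> dotv w (vertex C) <= M) ->
  dotv w y <= M.
Proof.
move=> [c [c0 c1 ->]] hM; rewrite dotv_sum.
apply: (@le_trans _ _ (\sum_(C in bases) c C * M)).
  by apply: ler_sum => C hC; apply: ler_wpM2l => //; apply: hM.
by rewrite -mulr_suml c1 mul1r.
Qed.

Lemma dotvDl (u v x : row) : dotv (u + v) x = dotv u x + dotv v x.
Proof. by rewrite /dotv -big_split; apply: eq_bigr => i _; rewrite mxE mulrDl. Qed.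

Lemma capcard A C : #|A| = r -> #|C| = r -> A != C -> (#|A :&: C| < r)%N.
Proof.
move=> cA cC nAC; rewrite ltn_neqAle; apply/andP; split; last by apply: leq_trans (subset_leq_card (subsetIl A C)) _; rewrite cA.
apply/negP => /eqP e; move/negP: nAC; apply.
have eI : A :&: C = A by apply/eqP; rewrite eqEcard subsetIl cA e leqnn.
have sAC : A \subset C by rewrite -eI subsetIr.
by rewrite eqEcard sAC cA cC leqnn.
Qed.

Lemma edge_face A B : A \in bases -> B \in bases -> A != B -> #|A :&: B|.+1 = r ->
  forall x, segment (vertex A) (vertex B) x <->
    (Pol x /\ forall y, Pol y -> dotv (vertex A + vertex B) y <= dotv (vertex A + vertex B) x).
Proof.
move=> hA hB nAB cAB.
have [cA _ _] := basesP A hA; have [cB _ _] := basesP B hB.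
set w := vertex A + vertex B.
set Mn := (r + r.-1)%N.
have dC : forall C, dotv w (vertex C) = (#|A :&: C| + #|B :&: C|)%:R.
  by move=> C; rewrite dotvDl !dot_vert natrD.
have dA : dotv w (vertex A) = Mn%:R.
  by rewrite dC setIid cA setIC /Mn; congr (_ + _)%:R; lia.
have dB : dotv w (vertex B) = Mn%:R.
  by rewrite dC setIid cB /Mn; congr _%:R; lia.
have dO : forall C, C \in bases -> C != A -> C != B -> dotv w (vertex C) + 1 <= Mn%:R.
  move=> C hC nA nB; have [cC _ _] := basesP C hC.
  rewrite eq_sym in nA; rewrite eq_sym in nB.
  have h2 := capcard cA cC nA; have h3 := capcard cB cC nB.
  by rewrite dC (_ : 1 = 1%:R) // -natrD ler_nat /Mn; lia.
have dle : forall C, C \in bases -> dotv w (vertex C) <= Mn%:R.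
  move=> C hC; case: (eqVneq C A) => [->|nA]; first by rewrite dA.
  case: (eqVneq C B) => [->|nB]; first by rewrite dB.
  by apply: le_trans (dO C hC nA nB); rewrite lerDl.
have polle : forall y, Pol y -> dotv w y <= Mn%:R by move=> y hy; apply: pol_le hy dle.
move=> x; split.
  case=> t [t0 t1 ->]; split.
    exists (fun C => if C == A then t else if C == B then 1 - t else 0); split.
    - by move=> C; case: eqP => _ //; case: eqP => _ //; rewrite subr_ge0.
    - rewrite (sum2 _ hA hB nAB) eqxx /= [B == A]eq_sym (negbTE nAB) eqxx /=.
      rewrite big1 ?addr0; first by rewrite addrC subrK.
      by move=> C /andP[_ /andP[/negbTE -> /negbTE ->]].
    - rewrite (sum2 (fun C => (if C == A then t else if C == B then 1 - t else 0) *: vertex C) hA hB nAB) eqxx /= [B == A]eq_sym (negbTE nAB) eqxx /=.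
      rewrite big1 ?addr0 // => C /andP[_ /andP[/negbTE -> /negbTE ->]]; by rewrite scale0r.
  move=> y /polle; rewrite dotvD !dotvZ dA dB; congr (_ <= _); ring.
case=> [[c [c0 c1 ex]] hmax].
have hx : Mn%:R <= dotv w x by rewrite -dA; apply: hmax; apply: pol_vert.
have dx : dotv w x = \sum_(C in bases) c C * dotv w (vertex C) by rewrite ex dotv_sum.
have z : forall C, C \in bases -> c C * (Mn%:R - dotv w (vertex C)) = 0.
  apply: psumr_eq0P.
    by move=> C hC; apply: mulr_ge0 => //; rewrite subr_ge0 dle.
  apply/eqP; rewrite eq_le; apply/andP; split; last first.
    by apply: sumr_ge0 => C hC; apply: mulr_ge0 => //; rewrite subr_ge0 dle.
  under eq_bigr => C _ do rewrite mulrBr.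
  by rewrite sumrB -mulr_suml c1 mul1r -dx subr_le0.
have cO : forall C, C \in bases -> C != A -> C != B -> c C = 0.
  move=> C hC nA nB; have := z C hC; move/eqP; rewrite mulf_eq0 => /orP[/eqP //|].
  rewrite subr_eq0 => /eqP e; have := dO C hC nA nB; rewrite -e; lra.
have sO : forall (F : lpath m r -> row),
    \sum_(C in bases | (C != A) && (C != B)) c C *: F C = 0.
  by move=> F; apply: big1 => C /andP[hC /andP[nA nB]]; rewrite cO // scale0r.
have sc : c A + c B = 1.
  rewrite -c1 (sum2 _ hA hB nAB) big1 ?addr0 // => C /andP[hC /andP[nA nB]]; exact: cO.
exists (c A); split => //.
  by rewrite -sc lerDl.
have -> : 1 - c A = c B by rewrite -sc; ring.
by rewrite ex (sum2 _ hA hB nAB) sO addr0.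
Qed.

End Poly2.


Set Implicit Arguments. Unset Strict Implicit. Unset Printing Implicit Defensive.

Lemma L1 i j k a c : i < j -> c + (j < k) = a + (i < k) -> a <= c.
Proof. by case: (ltnP i k); case: (ltnP j k) => /=; lia. Qed.
Lemma L2 i j k a b c q : i < j -> c + (j < k) = a + (i < k) ->
  ((i < k) && (k <= j) -> a < b) -> a <= q -> b <= q -> c <= q.
Proof. by case: (ltnP i k); case: (ltnP j k) => /=; lia. Qed.
Lemma L3 i j k a b d p : i < j -> d + (i < k) = b + (j < k) ->
  ((i < k) && (k <= j) -> a < b) -> p <= a -> p <= b -> p <= d.
Proof. by case: (ltnP i k); case: (ltnP j k) => /=; lia. Qed.
Lemma L4 i j k b d : i < j -> d + (i < k) = b + (j < k) -> d <= b.
Proof. by case: (ltnP i k); case: (ltnP j k) => /=; lia. Qed.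
Lemma L5 i j k a b : i < j -> b + (j < k) = a + (i < k) -> b = a + ((i < k) && (k <= j)).
Proof. by case: (ltnP i k); case: (leqP k j) => /=; lia. Qed.

Section Exch.
Variables (m r : nat) (P Q : lpath m r).
Implicit Types X A B C D : lpath m r.
Local Notation ht := (Defs.ht m r).
Local Notation below := (Defs.below m r).
Local Notation bases := (Defs.bases m r P Q).

Lemma basesP' C : reflect [/\ #|C| = r, below P C & below C Q] (C \in bases).
Proof. by rewrite inE; apply: (iffP and3P) => -[/eqP ? ? ?]; split => //; apply/eqP. Qed.

Lemma exch_core A B i : A \in bases -> B \in bases ->
  ht A i = ht B i -> ht B i.+1 = (ht A i.+1).+1 ->
  (forall C D, C \in bases -> D \in bases ->
     (forall x, (x \in C : nat) + (x \in D) = (x \in A : nat) + (x \in B)) -> C = A \/ C = B) ->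
  exists j, rib A B i j.
Proof.
move=> hA hB e0 e1 H.
have /basesP' [cA PA AQ] := hA; have /basesP' [cB PB BQ] := hB.
have iN : i < m + r.
  rewrite ltnNge; apply/negP => iN; move: e1; rewrite !ht_end ?cA ?cB //; [lia | lia | lia].
set oi := Ordinal iN.
have := htS A oi; have := htS B oi; rewrite /= e1 e0 => eB eA.
have oiA : oi \notin A by apply/negP => h; move: eA eB; rewrite h; lia.
have oiB : oi \in B by case: (boolP (oi \in B)) => // /negbTE h; move: eA eB; rewrite h; lia.
pose p k := (i < k) && (ht A k == ht B k).
have exP : exists k, p k by exists (m + r); rewrite /p iN !ht_end // cA cB eqxx.
case: (ex_minnP exP) => j' /andP[ij' ej'] jmin.
have j'1 : i.+1 != j' by apply/eqP => ej; move: ej'; rewrite -ej e1; lia.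
set j := j'.-1.
have ij : i < j by rewrite /j; lia.
have jj : j.+1 = j' by rewrite /j; lia.
have between : forall k, i < k <= j -> ht A k < ht B k.
  elim=> [|k IH]; first lia.
  move=> /andP[ik kj].
  have nk : ht A k.+1 != ht B k.+1.
    apply/negP => ek; have := jmin k.+1; rewrite /p ik ek => /(_ erefl); lia.
  case: (eqVneq k i) => [ki|ki].
    by rewrite ki e1.
  have := IH (ltac:(apply/andP; split; lia)).
  have := htS_le A k; have := ht_mono B (leqnSn k); move: nk; lia.
have jN : j < m + r.
  rewrite ltnNge; apply/negP => jN; have := between j; rewrite ij leqnn => /(_ erefl).
  by rewrite !ht_end // cA cB ltnn.
set oj := Ordinal jN.
have hj := between j (ltac:(apply/andP; split; lia)).
have := htS A oj; have := htS B oj; rewrite /= jj -(eqP ej') => eB' eA'.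
have ojA : oj \in A by case: (boolP (oj \in A)) => // /negbTE h; move: eA' eB'; rewrite h; lia.
have ojB : oj \notin B by apply/negP => h; move: eA' eB'; rewrite h; lia.
have noij : oi != oj by rewrite -(inj_eq val_inj) /=; lia.
set C := oi |: (A :\ oj); set D := oj |: (B :\ oi).
have hC : forall k, ht C k + (j < k) = ht A k + (i < k).
  move=> k; rewrite ht_addU; last by rewrite !inE negb_and oiA orbT.
  by rewrite -(ht_D1 k ojA) /=; lia.
have hD : forall k, ht D k + (i < k) = ht B k + (j < k).
  move=> k; rewrite ht_addU; last by rewrite !inE (negbTE ojB) andbF.
  by rewrite -(ht_D1 k oiB) /=; lia.
have cC : #|C| = r.
  by have := hC (m + r); rewrite !ht_end // cA jN iN /= => /eqP; rewrite eqn_add2r => /eqP.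
have cD : #|D| = r.
  by have := hD (m + r); rewrite !ht_end // cB jN iN /= => /eqP; rewrite eqn_add2r => /eqP.
have btw : forall k, (i < k) && (k <= j) -> ht A k < ht B k.
  by move=> k /between.
have bC : C \in bases.
  apply/basesP'; split => //; apply/belowP => k kn.
    move/belowP: PA => /(_ k kn) h; apply: leq_trans h (L1 ij (hC k)).
  move/belowP: AQ => /(_ k kn) h1; move/belowP: BQ => /(_ k kn) h2.
  exact: L2 ij (hC k) (btw k) h1 h2.
have bD : D \in bases.
  apply/basesP'; split => //; apply/belowP => k kn.
    move/belowP: PA => /(_ k kn) h1; move/belowP: PB => /(_ k kn) h2.
    exact: L3 ij (hD k) (btw k) h1 h2.
  move/belowP: BQ => /(_ k kn) h; exact: leq_trans (L4 ij (hD k)) h.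
have hs : forall x, (x \in C : nat) + (x \in D) = (x \in A : nat) + (x \in B).
  move=> x; rewrite !inE.
  case: (eqVneq x oi) => [->|xi].
    by rewrite (negbTE noij) (negbTE oiA) oiB.
  case: (eqVneq x oj) => [ej|xj] /=.
    by rewrite ej in xi *; rewrite ojA (negbTE ojB).
  by [].
have [eC|eC] := H C D bC bD hs.
  by move: oiA; rewrite -eC !inE eqxx.
exists j; split; first by apply/andP.
move=> k; have := hC k; rewrite eC; exact: L5 ij.
Qed.

End Exch.


Set Implicit Arguments. Unset Strict Implicit. Unset Printing Implicit Defensive.

Section Face.
Variables (m r : nat) (R : realFieldType) (P Q : lpath m r).
Implicit Types X A B C D : lpath m r.
Local Open Scope ring_scope.
Local Notation vertex := (Defs.vertex m r R).
Local Notation dotv := (Defs.dotv m r R).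
Local Notation segment := (Defs.segment m r R).
Local Notation bases := (Defs.bases m r P Q).
Local Notation Pol := (Defs.lpm_polytope m r R P Q).
Local Notation row := 'rV[R]_(m + r).

Lemma seg_sym (u v x : row) : segment u v x -> segment v u x.
Proof.
case=> t [t0 t1 ->]; exists (1 - t); split; [lra|lra|].
by rewrite addrC; congr (_ + _); congr (_ *: _); ring.
Qed.

Lemma seg_l (u v : row) : segment u v u.
Proof. by exists 1; split; [lra|lra|]; rewrite subrr scale0r addr0 scale1r. Qed.

Lemma face_vertex w (F : row -> Prop) (u v : row) :
  (forall x, F x <-> (Pol x /\ forall y, Pol y -> dotv w y <= dotv w x)) ->
  (forall x, F x <-> segment u v x) -> u != v ->
  exists2 A, A \in bases & u = vertex A.
Proof.
move=> hF hS nuv.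
have Fu : F u by apply/hS; exact: seg_l.
have [[c [c0 c1 eu]] hmax] := (hF u).1 Fu.
have le : forall C, C \in bases -> dotv w (vertex C) <= dotv w u.
  by move=> C hC; apply: hmax; apply: pol_vert.
have du : dotv w u = \sum_(C in bases) c C * dotv w (vertex C) by rewrite {1}eu dotv_sum.
have z : forall C, C \in bases -> c C * (dotv w u - dotv w (vertex C)) = 0.
  apply: psumr_eq0P.
    by move=> C hC; apply: mulr_ge0 => //; rewrite subr_ge0 le.
  under eq_bigr => C _ do rewrite mulrBr.
  by rewrite sumrB -mulr_suml c1 mul1r -du subrr.
have FC : forall C, C \in bases -> c C != 0 -> F (vertex C).
  move=> C hC nc; apply/hF; split; first exact: pol_vert.
  move=> y hy; apply: le_trans (hmax y hy) _.
  have := z C hC; move/eqP; rewrite mulf_eq0 (negbTE nc) /= subr_eq0 => /eqP ->; exact: lexx.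
have [x hx] : exists x, u 0 x != v 0 x.
  apply/existsP; apply: contraR nuv; rewrite negb_exists => /forallP h.
  by apply/eqP/rowP => x; move: (h x); rewrite negbK => /eqP.
set d := u 0 x - v 0 x.
have dn0 : d != 0 by rewrite subr_eq0.
have segx : forall C, F (vertex C) -> exists t, 
    d * u 0 x - d * vertex C 0 x = (1 - t) * (d * d) /\ (t = 1 -> vertex C = u).
  move=> C /hS [t [t0 t1 ->]]; exists t; split; first by rewrite !mxE /d; ring.
  by move=> ->; rewrite subrr scale0r addr0 scale1r.
have g : forall C, C \in bases -> 0 <= c C * (d * u 0 x - d * vertex C 0 x).
  move=> C hC; case: (eqVneq (c C) 0) => [->|nc]; first by rewrite mul0r.
  have := FC C hC nc => /hS [t [t0 t1 e]].
  apply: mulr_ge0 => //; rewrite e !mxE.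
  have -> : d * u 0 x - d * (t * u 0 x + (1 - t) * v 0 x) = (1 - t) * (d * d) by rewrite /d; ring.
  by apply: mulr_ge0; [lra | rewrite -expr2 sqr_ge0].
have ux : u 0 x = \sum_(C in bases) c C * vertex C 0 x by rewrite {1}eu summxE; apply: eq_bigr => C _; rewrite mxE.
have z2 : forall C, C \in bases -> c C * (d * u 0 x - d * vertex C 0 x) = 0.
  apply: psumr_eq0P; first exact: g.
  under eq_bigr => C _ do rewrite mulrBr.
  rewrite sumrB -mulr_suml c1 mul1r; apply/eqP; rewrite subr_eq0; apply/eqP.
  by rewrite {1}ux mulr_sumr; apply: eq_bigr => C _; rewrite mulrCA.
have [C hC nc] : exists2 C, C \in bases & c C != 0.
  apply/exists_inP; apply: contraLR (oner_neq0 R) => /exists_inPn h.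
  rewrite negbK -c1 big1 ?eqxx // => C hC; apply/eqP; rewrite -[_ == _]negbK h //.
exists C => //.
have [t [e1 e2]] := segx C (FC C hC nc).
apply/esym/e2; have := z2 C hC; move/eqP; rewrite mulf_eq0 (negbTE nc) /= e1.
rewrite mulf_eq0 mulf_eq0 (negbTE dn0) /= orbF subr_eq0 => /eqP <-.
by [].
Qed.

Lemma vsum A B C D :
  (forall x, (x \in C : nat) + (x \in D) = (x \in A : nat) + (x \in B)) ->
  vertex C + vertex D = vertex A + vertex B.
Proof.
move=> h; apply/rowP => x; rewrite !mxE; move: (h x).
by case: (x \in A); case: (x \in B); case: (x \in C); case: (x \in D) => //=; rewrite ?addr0 ?add0r.
Qed.

Lemma edge_rib F : is_edge m r R Pol F ->
  exists A B, [/\ A \in bases, B \in bases, (exists i j, rib A B i j) &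
                  forall x, F x <-> segment (vertex A) (vertex B) x].
Proof.
case=> [[w hF] [u [v [nuv hS]]]].
have hS' : forall x, F x <-> segment v u x.
  by move=> x; split => [/hS /seg_sym|/seg_sym /hS].
have [A hA eA] := face_vertex hF hS nuv.
have [B hB eB] := face_vertex hF hS' (ltac:(by rewrite eq_sym)).
have nAB : A != B by apply: contra nuv => /eqP eAB; rewrite eA eB eAB.
have Fu : F u by apply/hS; exact: seg_l.
have Fv : F v by apply/hS'; exact: seg_l.
have [Pu mu] := (hF u).1 Fu; have [Pv mv] := (hF v).1 Fv.
have duv : dotv w v = dotv w u by apply/eqP; rewrite eq_le mu // mv.
have H : forall C D, C \in bases -> D \in bases ->
    (forall x, (x \in C : nat) + (x \in D) = (x \in A : nat) + (x \in B)) -> C = A \/ C = B.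
  move=> C D hC hD hs.
  have e := vsum hs.
  have lC := mu _ (pol_vert R hC); have lD := mu _ (pol_vert R hD).
  have sCD : dotv w (vertex C) + dotv w (vertex D) = dotv w u + dotv w u.
    by rewrite -dotvD e dotvD -eA -eB duv.
  have eC : dotv w (vertex C) = dotv w u by apply/eqP; rewrite eq_le lC /=; lra.
  have FC : F (vertex C).
    apply/hF; split; first exact: pol_vert.
    by move=> y hy; rewrite eC; apply: mu.
  have [t [_ _ et]] := (hS _).1 FC.
  by rewrite eA eB in et; exact: seg_vert nAB et.
have [k hk] : exists k, ht m r A k != ht m r B k.
  have : [exists k : 'I_(m + r).+1, ht m r A k != ht m r B k].
    apply: contraR nAB; rewrite negb_exists => /forallP hk.
    apply/eqP; apply: ht_inj => k kn; have := hk (Ordinal (kn : (k < (m + r).+1)%N)); rewrite negbK => /eqP.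
    done.
  by case/existsP => k hk; exists k.
have exk : exists k, ht m r A k != ht m r B k by exists k.
case: (ex_minnP exk) => lo hlo lomin.
have lo0 : (0 < lo)%N by move: hlo; case: (lo) => //; rewrite !ht0.
have e0 : ht m r A lo.-1 = ht m r B lo.-1.
  apply/eqP; case: (boolP (ht m r A lo.-1 == ht m r B lo.-1)) => // /lomin; lia.
have := htS_le A lo.-1; have := htS_le B lo.-1.
have := ht_mono A (leqnSn lo.-1); have := ht_mono B (leqnSn lo.-1).
rewrite prednK // in hlo *.
move=> mB mA sB sA.
have [c1|c2] : ht m r B lo = (ht m r A lo).+1 \/ ht m r A lo = (ht m r B lo).+1.
  move: hlo; rewrite e0 in mA sA *; lia.
  have [j hj] := exch_core hA hB e0 (ltac:(by rewrite prednK)) H.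
  exists A, B; split => //; first by exists lo.-1, j.
  by move=> x; rewrite -eA -eB; exact: hS.
have H' : forall C D, C \in bases -> D \in bases ->
    (forall x, (x \in C : nat) + (x \in D) = (x \in B : nat) + (x \in A)) -> C = B \/ C = A.
  move=> C D hC hD hs; have [->|->] := H C D hC hD (fun x => etrans (hs x) (addnC _ _)).
  by right. by left.
have [j hj] := exch_core hB hA (esym e0) (ltac:(by rewrite prednK)) H'.
exists B, A; split => //; first by exists lo.-1, j.
by move=> x; rewrite hS; split => /seg_sym; rewrite -eA -eB.
Qed.

End Face.


Set Implicit Arguments. Unset Strict Implicit. Unset Printing Implicit Defensive.

Section Bottom.
Variables (m r : nat) (P Q : lpath m r).
Implicit Types X Y A B C D : lpath m r.
Local Notation ht := (Defs.ht m r).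
Local Notation below := (Defs.below m r).
Local Notation bases := (Defs.bases m r P Q).
Local Notation region := (Defs.region m r).
Local Notation comp := (Defs.comp m r).
Local Notation box := (Defs.box m r).
Local Notation label := (Defs.label m r).

Lemma comp_eq X Y a b a' b' : a <= b -> a' <= b' -> comp X a b = comp Y a' b' ->
  [/\ a = a', b = b' & forall k, a <= k <= b -> ht X k = ht Y k].
Proof.
move=> ab ab' e.
have sz := congr1 size e; rewrite !size_map !size_iota in sz.
have nth_c : forall Z c d k, k <= d - c -> nth (0, 0) (comp Z c d) k = (c + k - ht Z (c + k), ht Z (c + k)).
  by move=> Z c d k hk; rewrite (nth_map 0) ?size_iota ?ltnS // nth_iota ?ltnS.
have e0 : nth (0, 0) (comp X a b) 0 = nth (0, 0) (comp Y a' b') 0 by rewrite e.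
rewrite !nth_c // !addn0 in e0.
case: e0 => e1 e2; have h1 := ht_le X a; have h2 := ht_le Y a'.
have aa : a = a' by lia.
subst a'; have bb : b = b' by lia.
subst b'; split => // k /andP[k1 k2].
have ek : nth (0, 0) (comp X a b) (k - a) = nth (0, 0) (comp Y a b) (k - a) by rewrite e.
rewrite !nth_c ?leq_sub2r // in ek.
by case: ek; rewrite subnKC.
Qed.

Lemma label_lt (b : box) : label b < m + r.
Proof. rewrite /label; have := ltn_ord b.1; have := ltn_ord b.2; lia. Qed.

Lemma rib_bottom A B i j : A \in bases -> B \in bases -> rib A B i j ->
  block_tiled_bottom m r P Q A B [set region A B].
Proof.
move=> hA hB hr.
have /basesP' [cA PA AQ] := hA; have /basesP' [cB PB BQ] := hB.
have [/andP[ij jn] h] := hr.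
have AB := rib_below hr.
have hdiff : forall k, ht A k <> ht B k -> i < k <= j.
  by move=> k; rewrite h; case: (i < k <= j) => //; rewrite addn0.
have heq : forall k, i < k <= j -> ht A k <> ht B k.
  by move=> k hk; rewrite h hk; lia.
have heq' : forall k, ~~ (i < k <= j) -> ht A k = ht B k.
  by move=> k /negbTE hk; rewrite h hk addn0.
have nsq := rib_nosq hr.
have conn := rib_conn cA cB hr.
have blk : is_block m r P Q (region A B).
  split => //; last by exists A, B; split.
  apply/subsetP => b; rewrite !in_region => /andP[h1 h2].
  have lb := ltnW (label_lt b).
  move/belowP: PA => /(_ _ lb) h3; move/belowP: BQ => /(_ _ lb) h4.
  apply/andP; split; [exact: leq_trans h3 h1 | exact: leq_trans h2 h4].
have band : block_tiled_band m r P Q A B [set region A B].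
  split => //; split.
  - by split.
  - move=> a b [/andP[ab bn] eqab ha hb].
    case: ha => [a0|ha]; first by exists 0; split; [rewrite a0 | left].
    case: hb => [bm|hb]; first by exists b; split; [rewrite ab leqnn | right; left].
    exfalso; have /andP[h1 h2] := hdiff _ ha; have /andP[h3 h4] := hdiff _ hb.
    apply: (heq a); last by apply: eqab; rewrite leqnn ab.
    apply/andP; split; lia.
  - split.
    + by move=> S; rewrite inE => /eqP ->.
    + by move=> S T; rewrite !inE => /eqP -> /eqP ->; rewrite eqxx.
    + by rewrite big_set1.
  - move=> S T; rewrite !inE => /eqP -> /eqP -> _; exists 0%R => x y.
    by rewrite GRing.subr0 GRing.addr0.
split => // A' B' tau' [[[[cA' cB' PA' B'Q A'B'] _ [_ _ un'] _] nsq'] [fam1 [fam2 _]]].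
have m1 : maxint m r A B 0 i.
  split.
  - by rewrite leq0n /= (ltnW (ltn_trans ij jn)).
  - by move=> k /andP[_ k2]; apply: heq'; rewrite negb_and -leqNgt k2.
  - by left.
  - by right; apply: heq; rewrite ltnSn ij.
have [a1 [b1 [[/andP[ab1 _] eq1 _ _] e1]]] :=
  (fam1 (comp A 0 i)).1 (ex_intro _ 0 (ex_intro _ i (conj m1 erefl))).
have [ea1 eb1 hk1] := comp_eq (leq0n i) ab1 e1.
subst a1 b1.
have m2 : maxint m r A B j.+1 (m + r).
  split.
  - by rewrite jn leqnn.
  - by move=> k /andP[k1 _]; apply: heq'; apply/negP => /andP[_ k2]; move: (leq_trans k1 k2); rewrite ltnn.
  - by right; apply: heq; rewrite /= ij leqnn.
  - by left.
have [a2 [b2 [[/andP[ab2 _] eq2 _ _] e2]]] :=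
  (fam1 (comp A j.+1 (m + r))).1 (ex_intro _ j.+1 (ex_intro _ (m + r) (conj m2 erefl))).
have [ea2 eb2 hk2] := comp_eq jn ab2 e2.
subst a2 b2.
have K : ht A i.+1 < ht B i.+1 by rewrite h ltnSn ij addn1.
have [[x0 y0] hb0 [lb0 b02]] := box_at cA cB K.
set b0 := (x0, y0) in hb0 lb0 b02.
have hAi : ht A i.+1 = ht A i.
  have := htS_le B i; have := ht_mono A (leqnSn i); have := h i.+1; have := h i.
  rewrite ltnn ltnSn ij /=.
  move: (ht A i.+1) (ht A i) (ht B i.+1) (ht B i) => x y z w; clear -x y z w; lia.
have [S' hS' [d hd]] := fam2 (region A B) (set11 _).
have sub : S' \subset region A' B' by rewrite -un'; apply: bigcup_sup.
have : inZ m r S' (b0.1%:Z + d)%R (b0.2%:Z - d)%R.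
  rewrite hd GRing.addrK GRing.subrK; apply/existsP; exists b0; rewrite hb0 !eqxx.
  done.
case/existsP => -[cx cy] /andP[hc /andP[/eqP ec1 /eqP ec2]].
set c := (cx, cy) in hc ec1 ec2.
have ec1' : (Posz x0 + d)%R = Posz cx := ec1.
have ec2' : (Posz y0 - d)%R = Posz cy := ec2.
clear ec1 ec2.
have := (subsetP sub) c hc; rewrite in_region => /andP[c1 c2].
have lc : label c = i.+1.
  rewrite -lb0 /label /=; clear -ec1' ec2'; lia.
rewrite lc in c1 c2.
have t1 := ht_mono A' (leqnSn i); have t2 := htS_le B' i.
have t3 : ht A i = ht A' i by apply: hk1; rewrite leqnn.
have t4 : ht A' i = ht B' i by apply: eq1; rewrite leqnn.
have d0 : d = 0%R by rewrite hAi in b02; simpl in c1, c2, b02; clear -ec2' c1 c2 b02 t1 t2 t3 t4; lia.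
subst d.
have sub2 : region A B \subset region A' B'.
  apply/subsetP => b hb; apply: (subsetP sub).
  have : inZ m r S' b.1 b.2 by rewrite hd GRing.subr0 GRing.addr0; apply/existsP; exists b; rewrite hb !eqxx.
  case/existsP => c' /andP[hc' /andP[/eqP e1' /eqP e2']].
  suff -> : b = c' by [].
  by apply: box_eq; [case: e1' | case: e2'].
split; apply/belowP => k kn.
- case: (boolP (i < k <= j)) => hk.
  + have Kk : ht A k < ht B k by rewrite h hk addn1.
    have [b hb [lb b2]] := box_at cA cB Kk.
    have := (subsetP sub2) b hb; rewrite in_region lb b2 => /andP[u1 u2].
    move: (nosq_le k nsq' cA' cB') => nq; clear -u1 u2 nq; lia.
  + case: (leqP k i) => ki.
      by rewrite hk1 ?leq0n.
    have jk : j < k by move: hk; rewrite ki /= -ltnNge.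
    by rewrite hk2 ?jk ?kn.
- case: (boolP (i < k <= j)) => hk.
  + have Kk : ht A k < ht B k by rewrite h hk addn1.
    have [b hb [lb b2]] := box_at cA cB Kk.
    have := (subsetP sub2) b hb; rewrite in_region lb b2 => /andP[u1 u2].
    rewrite h hk addn1; exact: u2.
  + rewrite -heq' //.
    case: (leqP k i) => ki.
      by rewrite hk1 ?leq0n // eq1 ?leq0n.
    have jk : j < k by move: hk; rewrite ki /= -ltnNge.
    by rewrite hk2 ?jk ?kn // eq2 ?jk ?kn.
Qed.

End Bottom.


Unset Implicit Arguments. Set Strict Implicit. Set Printing Implicit Defensive.

Theorem proposition5p8 (R : realFieldType) (m r : nat) (P Q : lpath m r) :
  #|P| = r -> #|Q| = r -> below m r P Q -> connected_PQ m r P Q ->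
  [/\ (forall (A B : lpath m r) (tau : {set {set box m r}}),
         block_tiled_bottom m r P Q A B tau -> #|tau| = 1 ->
         is_edge m r R (lpm_polytope m r R P Q)
                 (segment m r R (vertex m r R A) (vertex m r R B))),
      (forall F, is_edge m r R (lpm_polytope m r R P Q) F ->
         exists (A B : lpath m r) (tau : {set {set box m r}}),
           [/\ block_tiled_bottom m r P Q A B tau, #|tau| = 1 &
               forall x, F x <-> segment m r R (vertex m r R A) (vertex m r R B) x]) &
      (forall (A B A' B' : lpath m r) (tau tau' : {set {set box m r}}),
         block_tiled_bottom m r P Q A B tau -> #|tau| = 1 ->
         block_tiled_bottom m r P Q A' B' tau' -> #|tau'| = 1 ->
         (forall x, segment m r R (vertex m r R A) (vertex m r R B) x <->
                    segment m r R (vertex m r R A') (vertex m r R B') x) ->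
         [/\ A = A', B = B' & tau = tau'])].
Proof.
move=> cP cQ PQ _.
have info : forall A B tau, block_tiled_bottom m r P Q A B tau -> #|tau| = 1 ->
    [/\ tau = [set region m r A B], A \in bases m r P Q, B \in bases m r P Q,
        below m r A B & exists i j, rib A B i j].
  move=> A B tau hb h1; have [et [cA cB] PA BQ [i [j hr]]] := bottom1 hb h1.
  have AB := rib_below hr.
  split => //; last by exists i, j.
    by apply/basesP'; split => //; apply: below_trans AB BQ.
  by apply/basesP'; split => //; apply: below_trans PA AB.
split.
- move=> A B tau hb h1; have [_ hA hB AB [i [j hr]]] := info A B tau hb h1.
  have nAB := rib_neq hr.
  have cAB : #|A :&: B|.+1 = r.
    have [oi [oj [_ _ oiA ojA eB]]] := rib_mem hr.
    have /basesP' [cA _ _] := hA.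
    have -> : A :&: B = A :\ oj.
      apply/setP => x; rewrite eB !inE.
      case: (eqVneq x oi) => [->|_] /=; first by rewrite (negbTE oiA) !andbF.
      by case: (x \in A); rewrite ?andbT ?andbF.
    by move: (cardsD1 oj A); rewrite ojA add1n cA => <-.
  split.
    exists (vertex m r R A + vertex m r R B)%R => x.
    exact: (edge_face hA hB nAB cAB).
  exists (vertex m r R A), (vertex m r R B); split => //.
  by apply: contra nAB => /eqP /vertex_inj ->.
- move=> F hF; have [A [B [hA hB [i [j hr]] hS]]] := edge_rib hF.
  exists A, B, [set region m r A B]; split => //; first exact: rib_bottom hA hB hr.
  exact: cards1.
- move=> A B A' B' tau tau' hb h1 hb' h1' hseg.
  have [et hA hB AB [i [j hr]]] := info A B tau hb h1.
  have [et' hA' hB' AB' [i' [j' hr']]] := info A' B' tau' hb' h1'.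
  have nAB := rib_neq hr; have nAB' := rib_neq hr'.
  have [t [_ _ eA]] := (hseg (vertex m r R A)).1 (seg_l _ _).
  have [s [_ _ eB]] := (hseg (vertex m r R B)).1 (seg_sym (seg_l _ _)).
  have [eA1|eA2] := seg_vert nAB' eA; have [eB1|eB2] := seg_vert nAB' eB.
  + by move: nAB; rewrite eA1 eB1 eqxx.
  + by subst; split.
  + subst; move: nAB; rewrite (below_anti AB AB') eqxx //.
  + by move: nAB; rewrite eA2 eB2 eqxx.
Qed.
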